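(* Let $n\ge 2$, let $(E,q)$, $E_{\mathbb R}$, the orientation of $E_{\mathbb R}$ and the isotropic map $s\colon\mathbb C^n\to E$ with $s(z)\neq 0$ for $z\neq 0$ be as in the context, and write $s=s_++is_-$ with $s_\pm\colon\mathbb C^n\to E_{\mathbb R}$. Then $$\sqrt e\,(E,s)\;=\;\deg\Big(S^{2n-1}\to S(E_{\mathbb R}),\ z\mapsto \tfrac{s_-(z)}{|s_-(z)|}\Big).$$
   Context: Fix $n\ge2$ and a complex vector space $E$ of dimension $2n$ with a nondegenerate symmetric complex bilinear form $q$. The $n$-dimensional isotropic (maximal isotropic) subspaces of $E$ form two connected components; one is fixed (this is the choice of complex orientation) and its members are called positive, the others negative. Fix a real subspace $E_{\mathbb R}\subset E$ with $E=E_{\mathbb R}\oplus iE_{\mathbb R}$ on which $q$ is real and positive definite, with inner product $\langle\cdot,\cdot\rangle=q|_{E_{\mathbb R}}$. For an orthogonal complex structure $J$ on $E_{\mathbb R}$, $\Lambda_J=\{a-iJa: a\in E_{\mathbb R}\}$ is maximal isotropic; orient $E_{\mathbb R}$ so that $\Lambda_J$ is positive whenever $J$ is compatible with this orientation. Let $s\colon\mathbb C^n\to E$ be continuous with $q(s(z),s(z))=0$ for all $z$ and $s(z)\ne0$ for $z\ne0$. Writing $s=s_++is_-$ with $s_\pm$ valued in $E_{\mathbb R}$, isotropy means $|s_+|=|s_-|$ and $\langle s_+,s_-\rangle=0$, so $s_\pm(z)\neq0$ for $z\ne0$. Orient the unit sphere $S^{2n-1}\subset\mathbb C^n$ as the boundary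 of the unit ball with the complex orientation, and the unit sphere $S(E_{\mathbb R})$ as the boundary of the unit ball of $E_{\mathbb R}$. The orthogonal Hopf index is $\sqrt e\,(E,s):=\deg\big(S^{2n-1}\to S(E_{\mathbb R}),\ z\mapsto s_+(z)/|s_+(z)|\big)\in\mathbb Z$ (for holomorphic $s$ this equals the cosection-localised square root Euler class of Oh–Thomas at the zero $0$). *)

(* Defs.v *)
From mathcomp Require Import all_boot all_order all_algebra.
From mathcomp Require Import all_classical all_reals all_analysis.
Set Implicit Arguments. Unset Strict Implicit. Unset Printing Implicit Defensive.
Import Order.TTheory GRing.Theory Num.Theory.
Import numFieldNormedType.Exports.
Local Open Scope classical_set_scope.
Local Open Scope ring_scope.

Definition dotv (R : realType) (N : nat) (u v : 'rV[R]_N) : R :=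
  \sum_(i < N) u 0 i * v 0 i.

Definition enorm (R : realType) (N : nat) (u : 'rV[R]_N) : R :=
  Num.sqrt (dotv u u).

Definition usphere (R : realType) (N : nat) : set 'rV[R]_N :=
  [set x | enorm x = 1].

Definition normalize (R : realType) (N : nat) (v : 'rV[R]_N) : 'rV[R]_N :=
  (enorm v)^-1 *: v.

Definition sphere_homotopic (R : realType) (N : nat)
    (f g : 'rV[R]_N -> 'rV[R]_N) : Prop :=
  exists H : R * 'rV[R]_N -> 'rV[R]_N,
    {within [set t : R | 0 <= t <= 1] `*` @usphere R N, continuous H} /\
    (forall t x, 0 <= t <= 1 -> usphere x -> usphere (H (t, x))) /\
    (forall x, usphere x -> H (0, x) = f x) /\
    (forall x, usphere x -> H (1, x) = g x).

Definition C1 (R : realType) (N : nat) (g : 'rV[R]_N -> 'rV[R]_N) : Prop :=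
  (forall x, differentiable g x) /\ (forall v, continuous (fun x => 'd g x v)).

(* For x on the sphere with image y = g x on the sphere, the linear map
   L_x : R^N -> R^N sending x to y and acting by dg_x on T_x S = x^perp
   (row-vector convention v |-> v *m L_x).  With both spheres oriented as
   boundaries of the unit ball (outward normal first), sign(det L_x) is the
   local orientation sign of g at x (w.r.t. the standard orientation). *)
Definition local_mx (R : realType) (N : nat) (g : 'rV[R]_N -> 'rV[R]_N)
    (x : 'rV[R]_N) : 'M[R]_N :=
  \matrix_(i < N, j < N)
    (('d g x (delta_mx 0 i - x 0 i *: x) + x 0 i *: g x) 0 j).

(* Brouwer degree relation of f : S^{N-1} -> S^{N-1}, where the source has the
   standard orientation of R^N and the target R^N is oriented by the ordered
   basis given by the rows of the invertible matrix B: f is homotopic to a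
   C^1 map g having a regular value y whose signed preimage count is d. *)
Definition degree_rel (R : realType) (N : nat) (B : 'M[R]_N)
    (f : 'rV[R]_N -> 'rV[R]_N) (d : int) : Prop :=
  exists (g : 'rV[R]_N -> 'rV[R]_N) (y : 'rV[R]_N) (xs : seq 'rV[R]_N),
    [/\ C1 g, (forall x, usphere x -> usphere (g x)),
        sphere_homotopic f g, usphere y & uniq xs] /\
    [/\ (forall x, x \in xs <-> (usphere x /\ g x = y)),
        (forall x, x \in xs -> \det (local_mx g x) != 0) &
        d = sgz (\det B) * \sum_(x <- xs) sgz (\det (local_mx g x))].

Definition degree (R : realType) (N : nat) (B : 'M[R]_N)
    (f : 'rV[R]_N -> 'rV[R]_N) : int :=
  xget 0%R [set d | degree_rel B f d].

(* The complex space E = E_R (+) i E_R, with E_R = R^(2n) (orthonormal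
   coordinates for <,> = q|E_R); an element u + i v is the pair (u, v).
   C^n is realified as R^(2n) with coordinates (Re z1, Im z1, ..., Re zn, Im zn),
   whose standard orientation is the complex orientation. *)
Definition Espace (R : realType) (n : nat) := ('rV[R]_(n.*2) * 'rV[R]_(n.*2))%type.

(* The complex bilinear form q, value given as (real part, imaginary part):
   q(a + i b, c + i d) = (<a,c> - <b,d>) + i (<a,d> + <b,c>). *)
Definition qform (R : realType) (n : nat) (e1 e2 : Espace R n) : R * R :=
  (dotv e1.1 e2.1 - dotv e1.2 e2.2, dotv e1.1 e2.2 + dotv e1.2 e2.1).

Definition sqrt_e (R : realType) (n : nat) (B : 'M[R]_(n.*2))
    (s : 'rV[R]_(n.*2) -> Espace R n) : int :=
  degree B (fun z => normalize (s z).1).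

(* Main.v *)
Require Import Defs.
From mathcomp Require Import all_boot all_order all_algebra.
From mathcomp Require Import all_classical all_reals all_analysis.
Import Order.TTheory GRing.Theory Num.Theory.
Import numFieldNormedType.Exports.
From mathcomp Require Import ring lra.
Local Open Scope classical_set_scope.
Local Open Scope ring_scope.

Section Aux.
Variables (R : realType) (N : nat).
Implicit Types (u v w : 'rV[R]_N).

Lemma dotvC u v : dotv u v = dotv v u.
Proof. by apply: eq_bigr => i _; rewrite mulrC. Qed.

Lemma dotvDl u v w : dotv (u + v) w = dotv u w + dotv v w.
Proof. by rewrite /dotv -big_split; apply: eq_bigr => i _; rewrite !mxE mulrDl. Qed.

Lemma dotvZl k u v : dotv (k *: u) v = k * dotv u v.
Proof. by rewrite /dotv mulr_sumr; apply: eq_bigr => i _; rewrite !mxE mulrA. Qed.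

Lemma dotvNl u v : dotv (- u) v = - dotv u v.
Proof. by rewrite -scaleN1r dotvZl mulN1r. Qed.

Lemma dotvDr u v w : dotv w (u + v) = dotv w u + dotv w v.
Proof. by rewrite dotvC dotvDl !(dotvC w). Qed.

Lemma dotvZr k u v : dotv v (k *: u) = k * dotv v u.
Proof. by rewrite dotvC dotvZl dotvC. Qed.

Lemma dotvNr u v : dotv v (- u) = - dotv v u.
Proof. by rewrite dotvC dotvNl dotvC. Qed.

Lemma dotv_ge0 u : 0 <= dotv u u.
Proof. by apply: sumr_ge0 => i _; rewrite -expr2 sqr_ge0. Qed.

Lemma dotv_eq0 u : dotv u u = 0 -> u = 0.
Proof.
move=> /eqP; rewrite psumr_eq0; last by move=> i _; rewrite -expr2 sqr_ge0.
move=> /allP H; apply/rowP => i; rewrite mxE.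
have := H i (mem_index_enum i); rewrite -expr2 sqrf_eq0 => /eqP.
by [].

Qed.

Lemma enorm_eq1 u : (enorm u = 1) <-> (dotv u u = 1).
Proof.
rewrite /enorm; split => [h|->]; last exact: sqrtr1.
by rewrite -(sqr_sqrtr (dotv_ge0 u)) h expr1n.
Qed.

Lemma usphere_neq0 u : usphere u -> u != 0.
Proof. by rewrite /usphere/= => /enorm_eq1 h; apply/eqP => u0; move: h; rewrite u0 /dotv big1 => [/eqP|i _]; rewrite ?mxE ?mul0r // eq_sym oner_eq0. Qed.

Lemma dotv_normalize u : u != 0 -> dotv (normalize u) (normalize u) = 1.
Proof.
move=> u0; rewrite /normalize dotvZl dotvZr /enorm.
have hp : 0 < dotv u u.
  by rewrite lt_neqAle dotv_ge0 andbT eq_sym; apply/eqP => /dotv_eq0 /eqP; rewrite (negbTE u0).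
rewrite mulrA -expr2 exprVn sqr_sqrtr ?dotv_ge0 // mulVf //; exact: lt0r_neq0.
Qed.

Lemma cvg_dotv (T : Type) (F : set_system T) {FF : Filter F} (f g : T -> 'rV[R]_N) u0 v0 :
  f @ F --> u0 -> g @ F --> v0 -> dotv (f x) (g x) @[x --> F] --> dotv u0 v0.
Proof.
move=> hf hg; rewrite /dotv.
apply: cvg_big => //; first by move=> z; apply: cvgD; [exact: cvg_fst|exact: cvg_snd].
move=> i _; apply: cvgM.
  exact: (@continuous_cvg _ _ _ _ _ f (fun M : 'rV[R]_N => M 0 i) _ (@coord_continuous _ _ _ _ _ _) hf).
exact: (@continuous_cvg _ _ _ _ _ g (fun M : 'rV[R]_N => M 0 i) _ (@coord_continuous _ _ _ _ _ _) hg).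
Qed.


Definition cc (t : R) := 2 * t / (1 + t ^+ 2).
Definition ss (t : R) := (1 - t ^+ 2) / (1 + t ^+ 2).
Definition rot (t : R) (a b w : 'rV[R]_N) :=
  w + (cc t - 1) *: (dotv w a *: a + dotv w b *: b)
    + ss t *: (dotv w a *: b - dotv w b *: a).

Lemma den_neq0 (t : R) : 1 + t ^+ 2 != 0.
Proof. by apply: lt0r_neq0; apply: ltr_pwDl => //; rewrite sqr_ge0. Qed.

Lemma rot_norm t a b w : dotv a a = 1 -> dotv b b = 1 -> dotv a b = 0 ->
  dotv (rot t a b w) (rot t a b w) = dotv w w.
Proof.
move=> haa hbb hab; rewrite /rot.
rewrite !(dotvDl, dotvDr, dotvZl, dotvZr, dotvNl, dotvNr).
rewrite !(dotvC a w) !(dotvC b w) !(dotvC b a) haa hbb hab.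
rewrite /cc /ss; have := den_neq0 t => hd.
by field.
Qed.

Lemma rot0 a b : dotv a a = 1 -> dotv a b = 0 -> rot 0 a b a = b.
Proof.
move=> haa hab; rewrite /rot /cc /ss haa hab.
rewrite expr0n /= mulr0 mul0r subr0 addr0 divr1.
rewrite sub0r scaleN1r !scale0r addr0 subr0 !scale1r.
by rewrite subrr add0r.
Qed.

Lemma rot1 a b w : rot 1 a b w = w.
Proof.
rewrite /rot /cc /ss expr1n subrr mul0r scale0r addr0 mulr1.
by rewrite divff ?subrr ?scale0r ?addr0 // (den_neq0 1).
Qed.

Lemma cvg_rot (T : Type) (F : set_system T) {FF : Filter F}
  (t_ : T -> R) (a_ b_ w_ : T -> 'rV[R]_N) t0 a0 b0 w0 :
  t_ @ F --> t0 -> a_ @ F --> a0 -> b_ @ F --> b0 -> w_ @ F --> w0 ->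
  rot (t_ x) (a_ x) (b_ x) (w_ x) @[x --> F] --> rot t0 a0 b0 w0.
Proof.
move=> ht ha hb hw.
have hden : (1 + t_ x ^+ 2)^-1 @[x --> F] --> (1 + t0 ^+ 2)^-1.
  apply: (cvgV (den_neq0 t0)); apply: cvgD; first exact: cvg_cst.
  by rewrite expr2; under eq_cvg do rewrite expr2; apply: cvgM.
have hc : cc (t_ x) @[x --> F] --> cc t0.
  by apply: cvgM => //; apply: cvgM => //; exact: cvg_cst.
have hs : ss (t_ x) @[x --> F] --> ss t0.
  apply: cvgM => //; apply: cvgB; first exact: cvg_cst.
  by rewrite expr2; under eq_cvg do rewrite expr2; apply: cvgM.
have hpa : dotv (w_ x) (a_ x) @[x --> F] --> dotv w0 a0 by apply: cvg_dotv.
have hpb : dotv (w_ x) (b_ x) @[x --> F] --> dotv w0 b0 by apply: cvg_dotv.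
rewrite /rot; apply: cvgD; first apply: cvgD => //.
  apply: cvgZ; first by apply: cvgB => //; exact: cvg_cst.
  by apply: cvgD; apply: cvgZ.
by apply: cvgZ => //; apply: cvgB; apply: cvgZ.
Qed.

End Aux.

Lemma homot_rot (R : realType) (N : nat) (a b g : 'rV[R]_N -> 'rV[R]_N) :
  (forall x, usphere x -> {for x, continuous a}) ->
  (forall x, usphere x -> {for x, continuous b}) ->
  (forall x, usphere x -> [/\ dotv (a x) (a x) = 1, dotv (b x) (b x) = 1 & dotv (a x) (b x) = 0]) ->
  sphere_homotopic a g -> sphere_homotopic b g.
Proof.
move=> ca cb horth [H [hc [hs [h0 h1]]]].
exists (fun p : R * 'rV[R]_N => @rot R N p.1 (a p.2) (b p.2) (H p)); split; last split; last split.
- apply/subspace_continuousP => p Ap.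
  move/subspace_continuousP: hc => /(_ p Ap) hc.
  case: Ap => _ Ap2.
  rewrite /from_subspace /= in hc *. have FF : Filter (within ([set t : R | 0 <= t <= 1] `*` @usphere R N) (nbhs p)) by apply: within_filter; apply: nbhs_filter.
  have e1 : (fun x : R * 'rV[R]_N => x.1) @ within ([set t : R | 0 <= t <= 1] `*` @usphere R N) (nbhs p) --> p.1.
    by apply: cvg_trans; [apply: cvg_fmap2; exact: cvg_within|]; exact: cvg_fst.
  have e2 : (fun x : R * 'rV[R]_N => a x.2) @ within ([set t : R | 0 <= t <= 1] `*` @usphere R N) (nbhs p) --> a p.2.
    apply: cvg_trans; [apply: cvg_fmap2; exact: cvg_within|].
    apply: (@continuous_cvg _ _ _ _ _ snd a _ (ca _ Ap2)); exact: cvg_snd.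
  have e3 : (fun x : R * 'rV[R]_N => b x.2) @ within ([set t : R | 0 <= t <= 1] `*` @usphere R N) (nbhs p) --> b p.2.
    apply: cvg_trans; [apply: cvg_fmap2; exact: cvg_within|].
    apply: (@continuous_cvg _ _ _ _ _ snd b _ (cb _ Ap2)); exact: cvg_snd.
  exact: (@cvg_rot R N _ _ FF (fun x => x.1) (fun x => a x.2) (fun x => b x.2) H _ _ _ _ e1 e2 e3 hc).
- move=> t x ht hx; have [haa hbb hab] := horth x hx.
  apply/enorm_eq1; rewrite rot_norm //; apply/enorm_eq1; exact: hs.
- move=> x hx; have [haa hbb hab] := horth x hx; by rewrite /= h0 // rot0.
- by move=> x hx; rewrite /= rot1 h1.
Qed.

Lemma normalize_cont (R : realType) (N : nat) (T : topologicalType) (f : T -> 'rV[R]_N) z :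
  {for z, continuous f} -> f z != 0 -> {for z, continuous (fun x => normalize (f x))}.
Proof.
move=> hf fz0.
have hp : 0 < dotv (f z) (f z).
  by rewrite lt_neqAle dotv_ge0 andbT eq_sym; apply/eqP => /(@dotv_eq0 _ _ _) /eqP; rewrite (negbTE fz0).
have hd : dotv (f x) (f x) @[x --> z] --> dotv (f z) (f z) by apply: cvg_dotv.
have he : enorm (f x) @[x --> z] --> enorm (f z).
  exact: (@continuous_cvg _ _ _ _ _ (fun x => dotv (f x) (f x)) (@Num.sqrt R) _ (@sqrt_continuous R _) hd).
have hne : enorm (f z) != 0 by rewrite /enorm sqrtr_eq0 -ltNge.
rewrite /normalize; apply: cvgZ => //; exact: cvgV.
Qed.

Theorem mainTheorem1 (R : realType) (n : nat) (B : 'M[R]_(n.*2))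
    (s : 'rV[R]_(n.*2) -> Espace R n) :
  (2 <= n)%N ->
  \det B != 0 ->
  continuous s ->
  (forall z, qform (s z) (s z) = (0, 0)) ->
  (forall z, z != 0 -> s z != (0, 0)) ->
  sqrt_e B s = degree B (fun z => normalize (s z).2).
Proof.
move=> _ _ hs hq hnz.
have iso z : dotv (s z).1 (s z).1 = dotv (s z).2 (s z).2 /\ dotv (s z).1 (s z).2 = 0.
  have := hq z; rewrite /qform => -[h1 h2]; split.
    by apply/eqP; rewrite -subr_eq0 h1.
  by move: h2; rewrite (dotvC _ _ (s z).2); lra.
have d00 : dotv (0 : 'rV[R]_(n.*2)) 0 = 0.
  by rewrite /dotv big1 // => i _; rewrite mxE mul0r.
have nz z : usphere z -> (s z).1 != 0 /\ (s z).2 != 0.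
  move=> /usphere_neq0 /hnz; case: (iso z) => e1 _.
  case E: (s z) => [u v] /=; rewrite E /= in e1 => hne.
  have H0 : u != 0 \/ v != 0.
    case: (eqVneq u 0) => [u0|]; last by left.
    case: (eqVneq v 0) => [v0|]; last by right.
    by move: hne; rewrite u0 v0 eqxx.
  case: H0 => h.
    split => //; apply/eqP => v0; move: e1; rewrite v0 d00.
    by move=> /(@dotv_eq0 _ _ _) /eqP; rewrite (negbTE h).
  split => //; apply/eqP => u0; move: e1; rewrite u0 d00 => e1.
  by move: (@dotv_eq0 _ _ _ (esym e1)) => /eqP; rewrite (negbTE h).
have c1 : forall x, usphere x -> {for x, continuous (fun z => normalize (s z).1)}.
  move=> x /nz [h _].
  apply: (@normalize_cont R (n.*2) _ (fun z => (s z).1) x _ h).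
  apply: (@continuous_comp _ _ _ s fst x (hs x)).
  exact: cvg_fst.
have c2 : forall x, usphere x -> {for x, continuous (fun z => normalize (s z).2)}.
  move=> x /nz [_ h].
  apply: (@normalize_cont R (n.*2) _ (fun z => (s z).2) x _ h).
  apply: (@continuous_comp _ _ _ s snd x (hs x)).
  exact: cvg_snd.
have orth : forall x, usphere x ->
  [/\ dotv (normalize (s x).1) (normalize (s x).1) = 1,
      dotv (normalize (s x).2) (normalize (s x).2) = 1 &
      dotv (normalize (s x).1) (normalize (s x).2) = 0].
  move=> x /nz [h1 h2]; split; try exact: dotv_normalize.
  by rewrite /normalize dotvZl dotvZr (proj2 (iso x)) !mulr0.
have orth' : forall x, usphere x ->
  [/\ dotv (normalize (s x).2) (normalize (s x).2) = 1,
      dotv (normalize (s x).1) (normalize (s x).1) = 1 &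
      dotv (normalize (s x).2) (normalize (s x).1) = 0].
  by move=> x /orth [h1 h2 h3]; split => //; rewrite dotvC.
rewrite /sqrt_e /degree; congr (xget 0 _).
apply/funext => d; apply/propext; split.
  move=> [g [y [xs [[h1 h2 h3 h4 h5] h6]]]]; exists g, y, xs; split => //; split => //.
  exact: (@homot_rot _ _ _ _ _ c1 c2 orth).
move=> [g [y [xs [[h1 h2 h3 h4 h5] h6]]]]; exists g, y, xs; split => //; split => //.
exact: (@homot_rot _ _ _ _ _ c2 c1 orth').
Qed.
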